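(* Let $n\geq1$ and $1\leq k\leq n$. Then there exists $\eta\in\Omega$ with $\eta\neq\eta_k$ such that $f_k(m_{J_\eta})=f_k(m_{J_{\eta_k}})$.
   Context: $f_k(v)=kv_1+(1-k)v_2$. $\Lambda_{3,n}=\{\beta\in\mathbb N^3:1\leq|\beta|\leq n\}$; $A_n=\begin{pmatrix}1&1&n\\0&1&n+1\end{pmatrix}$; for $J\subset\Lambda_{3,n}$, $m_J=\sum_{\beta\in J}A_n\beta$. $\Omega$ is the set of $\eta=(z,d_0,\ldots,d_r)$ with $z\in\{0,1\}$, $d_0=0$, $d_i\geq1$ ($1\leq i\leq r$), $\sum d_i=n$. For $j\in\{1,\ldots,n\}$, $t$ unique with $\sum_{i<t}d_i<j\leq\sum_{i\leq t}d_i$, $c=j-\sum_{i<t}d_i$; $v_{j,\eta}=(\sum_{i\text{ odd},i<t}d_i+c,0)$ if $z=1,t$ odd; $(0,\sum_{i\text{ even},i<t}d_i+c)$ if $z=1,t$ even; $(0,\sum_{i\text{ odd},i<t}d_i+c)$ if $z=0,t$ odd; $(\sum_{i\text{ even},i<t}d_i+c,0)$ if $z=0,t$ even. $T_{j,\eta}=\{v_{j,\eta}+p(1,1):0\leq p\leq n-j\}$, $T_{0,\eta}=\{(p,p):1\leq p\leq n\}$, $r_{j,\eta}=n\pi_2(v_{j,\eta})$, $T'_\eta=T_{0,\eta}\cup\bigcup_{j=1}^n(T_{j,\eta}+r_{j,\eta}(1,1))$, and $J_\eta=\{\beta\in\Lambda_{3,n}:A_n\beta\in T'_\eta\}$ (which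 $\beta\mapsto A_n\beta$ maps bijectively onto $T'_\eta$). $\eta_k$: $z_k=1$ if $k\leq n+1-k$, else $0$; $d_{k,0}=0$; for $l\geq1$, $O_l=\sum_{j\text{ odd},j\leq l-1}d_{k,j}$, $E_l=\sum_{j\text{ even},j\leq l-1}d_{k,j}$; $t_l=\max\{m\in\mathbb N:mk\leq(E_l+1)(n+1-k)\}$ ($z_k=1$, $l$ odd), $\max\{m:m(n+1-k)\leq(O_l+1)k\}$ ($z_k=1$, $l$ even), $\max\{m:m(n+1-k)\leq(E_l+1)k\}$ ($z_k=0$, $l$ odd), $\max\{m:mk\leq(O_l+1)(n+1-k)\}$ ($z_k=0$, $l$ even); $s_1=0$, $s_l=O_l$ (odd $l>1$), $s_l=E_l$ (even $l$); $d_{k,l}=\min\{n-\sum_{j<l}d_{k,j},t_l-s_l\}$, stopping at first $r$ with $\sum_{j\leq r}d_{k,j}=n$; $\eta_k=(z_k,d_{k,0},\ldots,d_{k,r})\in\Omega$. *)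

(* Defs.v *)
From mathcomp Require Import all_boot all_order all_algebra.
Set Implicit Arguments. Unset Strict Implicit. Unset Printing Implicit Defensive.
Import GRing.Theory Num.Theory.

Definition fk (k : nat) (v : nat * nat) : int :=
  (k%:Z * (v.1)%:Z + (1 - k%:Z) * (v.2)%:Z)%R.

(* Lambda_{3,n} = { beta in N^3 : 1 <= |beta| <= n }, enumerated without
   repetition (every coordinate is automatically <= n). *)
Definition Lambda3 (n : nat) : seq (nat * nat * nat) :=
  [seq b <- flatten [seq [seq (a, b, c) | b <- iota 0 n.+1, c <- iota 0 n.+1] | a <- iota 0 n.+1]
   | (1 <= b.1.1 + b.1.2 + b.2 <= n)].

Definition An (n : nat) (b : nat * nat * nat) : nat * nat :=
  (b.1.1 + b.1.2 + n * b.2, b.1.2 + n.+1 * b.2).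

Definition mJ (n : nat) (J : pred (nat * nat * nat)) : nat * nat :=
  (\sum_(b <- Lambda3 n | J b) (An n b).1, \sum_(b <- Lambda3 n | J b) (An n b).2).

(* eta = (z, d_0, d_1, ..., d_r) is represented as (z, [:: d_1; ...; d_r]) :
   z = true means z = 1, z = false means z = 0, and d_0 = 0 is implicit. *)
Definition Omega (n : nat) (eta : bool * seq nat) : bool :=
  all (fun d => 0 < d) eta.2 && (sumn eta.2 == n).

Definition oddsum (ds : seq nat) : nat :=
  \sum_(0 <= i < size ds | odd i.+1) nth 0 ds i.
Definition evensum (ds : seq nat) : nat :=
  \sum_(0 <= i < size ds | ~~ odd i.+1) nth 0 ds i.

(* t = the (unique, for eta in Omega and 1 <= j <= n) index t >= 1 with
   sum_{i<t} d_i < j <= sum_{i<=t} d_i, i.e. the least t with j <= d_1+...+d_t. *)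
Definition tidx (ds : seq nat) (j : nat) : nat :=
  (find (fun i => j <= sumn (take i.+1 ds)) (iota 0 (size ds))).+1.

Definition vpt (eta : bool * seq nat) (j : nat) : nat * nat :=
  let ds := eta.2 in
  let t := tidx ds j in
  let pre := take t.-1 ds in
  let c := j - sumn pre in
  let O := oddsum pre in
  let E := evensum pre in
  if eta.1 then
    (if odd t then (O + c, 0) else (0, E + c))
  else
    (if odd t then (0, O + c) else (E + c, 0)).

Definition rj (n : nat) (eta : bool * seq nat) (j : nat) : nat := n * (vpt eta j).2.

(* membership in T'_eta = T_0 u U_{j=1}^n (T_{j,eta} + r_{j,eta}(1,1)) *)
Definition inTprime (n : nat) (eta : bool * seq nat) (x : nat * nat) : bool :=
  ((x.1 == x.2) && (1 <= x.1 <= n))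
  || has (fun j => has (fun p =>
            x == ((vpt eta j).1 + p + rj n eta j, (vpt eta j).2 + p + rj n eta j))
            (iota 0 (n - j).+1))
         (iota 1 n).

Definition Jeta (n : nat) (eta : bool * seq nat) : pred (nat * nat * nat) :=
  fun b => inTprime n eta (An n b).

(* max { m in N : m * a <= b } for a > 0, which is b %/ a (see maxmul_spec). *)
Definition maxmul (a b : nat) : nat := b %/ a.

Lemma maxmul_spec a b m : 0 < a -> (m <= maxmul a b) = (m * a <= b).
Proof. by move=> a0; rewrite /maxmul leq_divRL. Qed.

(* One step of the construction of eta_k: ds = [:: d_{k,1}; ...; d_{k,l-1}],
   returns d_{k,l}. *)
Definition dstep (n k : nat) (z : bool) (l : nat) (ds : seq nat) : nat :=
  let O := oddsum ds in
  let E := evensum ds in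
  let t :=
    if z then
      (if odd l then maxmul k ((E + 1) * (n + 1 - k))
       else maxmul (n + 1 - k) ((O + 1) * k))
    else
      (if odd l then maxmul (n + 1 - k) ((E + 1) * k)
       else maxmul k ((O + 1) * (n + 1 - k))) in
  let s := if l == 1 then 0 else if odd l then O else E in
  minn (n - sumn ds) (t - s).

(* iterate until the first r with sum_{j<=r} d_{k,j} = n (fuel bounds the
   number of steps; n steps suffice since every d_{k,l} >= 1). *)
Fixpoint dgen (n k : nat) (z : bool) (fuel l : nat) (ds : seq nat) : seq nat :=
  if sumn ds == n then ds else
  match fuel with
  | 0 => ds
  | fuel'.+1 => dgen n k z fuel' l.+1 (rcons ds (dstep n k z l ds))
  end.

Definition eta_k (n k : nat) : bool * seq nat :=
  let z := k <= n + 1 - k in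
  (z, dgen n k z n 1 [::]).

(* Main.v *)
Require Import Defs.
From mathcomp Require Import all_boot all_order all_algebra zify ring.
Set Implicit Arguments. Unset Strict Implicit. Unset Printing Implicit Defensive.
Import GRing.Theory.

Lemma oddsum_rcons ds d : oddsum (rcons ds d) = oddsum ds + (if odd (size ds).+1 then d else 0).
Proof.
rewrite /oddsum size_rcons big_mkcond big_nat_recr //= nth_rcons ltnn eqxx.
rewrite [in RHS]big_mkcond; congr (_ + _); apply: eq_big_nat => i /andP[_ hi].
by rewrite nth_rcons hi.
Qed.

Lemma evensum_rcons ds d : evensum (rcons ds d) = evensum ds + (if odd (size ds).+1 then 0 else d).
Proof.
rewrite /evensum size_rcons big_mkcond big_nat_recr //= nth_rcons ltnn eqxx.
rewrite [in RHS]big_mkcond; congr (_ + _); first (apply: eq_big_nat => i /andP[_ hi]; by rewrite nth_rcons hi).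
by case: (odd _).
Qed.

Lemma oddevensum ds : oddsum ds + evensum ds = sumn ds.
Proof.
elim/last_ind: ds => [|ds d IH]; first by rewrite /oddsum /evensum !big_geq.
rewrite oddsum_rcons evensum_rcons -cats1 sumn_cat /= -IH. case: (odd _) => /=; lia.
Qed.

Definition pt (z b : bool) (c : nat) : nat * nat := if z == b then (c, 0) else (0, c).

Lemma vpt_pt z ds j :
  vpt (z, ds) j = pt z (odd (tidx ds j)) ((if odd (tidx ds j) then oddsum (take (tidx ds j).-1 ds) else evensum (take (tidx ds j).-1 ds)) + (j - sumn (take (tidx ds j).-1 ds))).
Proof. by rewrite /vpt /pt /=; case: z; case: (odd _). Qed.

Lemma take_rcons_lt (ds : seq nat) d i : i < size ds -> take i.+1 (rcons ds d) = take i.+1 ds.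
Proof.
move=> hi; rewrite -cats1 take_cat.
case: ltnP => // h2. have -> : i.+1 - size ds = 0 by lia. by rewrite take0 cats0 take_oversize.
Qed.

Lemma tidx_prefix ds d j : 0 < j <= sumn ds -> tidx (rcons ds d) j = tidx ds j.
Proof.
move=> /andP[j0 js]; rewrite /tidx size_rcons -[(size ds).+1]addn1 iotaD find_cat.
have hh : has (fun i => j <= sumn (take i.+1 (rcons ds d))) (iota 0 (size ds)).
  case: ds js => [|x ds] js; first by move: js; rewrite /=; lia.
  apply/hasP; exists (size ds); first by rewrite mem_iota /=.
  rewrite -cats1 take_cat /= ltnn subnn /= cats0. exact: js.

rewrite hh; congr (_.+1); apply: eq_in_find => i; rewrite mem_iota => /andP[_ hi].
by rewrite add0n in hi; rewrite take_rcons_lt.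
Qed.

Lemma tidx_lt ds j : 0 < j <= sumn ds -> (tidx ds j).-1 < size ds.
Proof.
move=> /andP[j0 js]; rewrite /tidx /= -[X in _ < X](size_iota 0) -has_find.
case: ds js => [|x ds] js; first by move: js; rewrite /=; lia.
apply/hasP; exists (size ds); first by rewrite mem_iota /=.
by rewrite -/(size (x::ds)) take_size.
Qed.

Lemma vpt_prefix z ds d j : 0 < j <= sumn ds -> vpt (z, rcons ds d) j = vpt (z, ds) j.
Proof.
move=> hj; rewrite !vpt_pt tidx_prefix //.
have := tidx_lt hj; set t := tidx ds j => ht.
by rewrite -cats1 take_cat ht.
Qed.

Lemma vpt_last z ds d c : 0 < c <= d ->
  vpt (z, rcons ds d) (sumn ds + c) =
  pt z (odd (size ds).+1) ((if odd (size ds).+1 then oddsum ds else evensum ds) + c).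
Proof.
move=> /andP[c0 cd].
have ht : tidx (rcons ds d) (sumn ds + c) = (size ds).+1.
  rewrite /tidx size_rcons; congr (_.+1).
  rewrite -[(size ds).+1]addn1 iotaD find_cat.
  have -> : has (fun i => sumn ds + c <= sumn (take i.+1 (rcons ds d))) (iota 0 (size ds)) = false.
    apply/hasP => -[i]; rewrite mem_iota => /andP[_ hi].
    rewrite add0n in hi; rewrite take_rcons_lt //.
    have : sumn (take i.+1 ds) <= sumn ds.
      by rewrite -{2}(cat_take_drop i.+1 ds) sumn_cat leq_addr.
    lia.
  rewrite size_iota /= take_oversize ?size_rcons // -cats1 sumn_cat /=.
  have -> : sumn ds + c <= sumn ds + (d + 0) by lia.
  by rewrite addn0.
rewrite vpt_pt ht /= -cats1 take_cat ltnn subnn /= cats0.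
by congr (pt _ _ (_ + _)); lia.
Qed.

Definition PP n k := if k <= n + 1 - k then n + 1 - k else k.
Definition QQ n k := if k <= n + 1 - k then k else n + 1 - k.

Lemma dstep_eq n k ds :
  dstep n k (k <= n + 1 - k) (size ds).+1 ds =
  minn (n - sumn ds)
   ((if odd (size ds).+1 then ((evensum ds + 1) * PP n k) %/ QQ n k
     else ((oddsum ds + 1) * QQ n k) %/ PP n k)
    - (if odd (size ds).+1 then oddsum ds else evensum ds)).
Proof.
rewrite /dstep /PP /QQ /maxmul.
have -> : (if (size ds).+1 == 1 then 0 else if odd (size ds).+1 then oddsum ds else evensum ds)
        = (if odd (size ds).+1 then oddsum ds else evensum ds).
  case: ds => [|x ds] //=; by rewrite /oddsum big_geq.
by case: (k <= n + 1 - k); case: (odd _).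
Qed.

Definition Inv (n P Q : nat) (ds : seq nat) : Prop :=
  let O := oddsum ds in let E := evensum ds in
  [/\ all (fun d => 0 < d) ds, sumn ds <= n,
      O * Q <= (E + 1) * P /\ E * P <= (O + 1) * Q,
      (ds <> [::] -> if odd (size ds) then E * P <= (O - last 0 ds + 1) * Q
                     else O * Q <= (E - last 0 ds + 1) * P) &
      (sumn ds < n -> if odd (size ds) then (E + 1) * P <= (O + 1) * Q
                      else (O + 1) * Q <= (E + 1) * P)].

Lemma div_bounds X Q : 0 < Q -> (X %/ Q) * Q <= X < (X %/ Q).+1 * Q.
Proof. by move=> q0; rewrite leq_trunc_div ltn_ceil. Qed.

Lemma Inv_step n P Q ds d :
  d = minn (n - sumn ds)
   ((if odd (size ds).+1 then ((evensum ds + 1) * P) %/ Q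
     else ((oddsum ds + 1) * Q) %/ P)
    - (if odd (size ds).+1 then oddsum ds else evensum ds)) ->
  0 < Q <= P -> Inv n P Q ds -> sumn ds < n -> 0 < d /\ Inv n P Q (rcons ds d).
Proof.
move=> hdef /andP[q0 qp] [hpos hsum [b1 b2] hc hd] hlt.
have p0 : 0 < P by lia.
have hS := oddevensum ds.
move: hd => /(_ hlt) hd.
rewrite /Inv oddsum_rcons evensum_rcons size_rcons last_rcons -cats1 sumn_cat /= addn0 all_cat /= hpos andbT.
move: hdef hc hd; rewrite /=.
case: (boolP (odd (size ds))) => hodd /= hdef hc hd. 
- (* next block even: E grows *)
  set t := ((oddsum ds + 1) * Q) %/ P in hdef.
  have [t1 t2] := andP (div_bounds ((oddsum ds + 1) * Q) p0); rewrite -/t in t1 t2.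
  have ht : evensum ds + 1 <= t by rewrite /t leq_divRL.
  have d0 : 0 < d by rewrite hdef; lia.
  have hdt : evensum ds + d <= t by rewrite hdef; lia.
  split=> //; split=> //.
  + by rewrite hdef; lia.
  + split.
    * rewrite addn0; apply: (leq_trans b1); rewrite leq_mul2r; lia.
    * rewrite ?addn0; apply: (leq_trans _ t1); rewrite leq_mul2r; lia.
  + by move=> _; rewrite addn0 addnK.
  + move=> hlt2.
    have hdd : d = t - evensum ds by rewrite hdef; lia.
    rewrite hdd (_ : evensum ds + (t - evensum ds) = t); last by lia.
    rewrite ?addn0; nia.
- set t := ((evensum ds + 1) * P) %/ Q in hdef.
  have [t1 t2] := andP (div_bounds ((evensum ds + 1) * P) q0); rewrite -/t in t1 t2.
  have ht : oddsum ds + 1 <= t by rewrite /t leq_divRL.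
  have d0 : 0 < d by rewrite hdef; lia.
  have hdt : oddsum ds + d <= t by rewrite hdef; lia.
  split=> //; split=> //.
  + by rewrite hdef; lia.
  + split.
    * rewrite ?addn0; apply: (leq_trans _ t1); rewrite leq_mul2r; lia.
    * rewrite ?addn0; apply: (leq_trans b2); rewrite leq_mul2r; lia.
  + move=> _; rewrite (_ : oddsum ds + d - d = oddsum ds); last by lia.
    by rewrite addn0.
  + move=> hlt2.
    have hdd : d = t - oddsum ds by rewrite hdef; lia.
    rewrite hdd (_ : oddsum ds + (t - oddsum ds) = t); last by lia.
    rewrite ?addn0; nia.
Qed.

Lemma PQ_facts n k : 1 <= k <= n -> [/\ 0 < QQ n k, QQ n k <= PP n k & PP n k + QQ n k = n + 1].
Proof. move=> hk; rewrite /PP /QQ; case: ifP => h; split; lia. Qed.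

Lemma Inv_dgen n k fuel ds : 1 <= k <= n ->
  Inv n (PP n k) (QQ n k) ds -> n - sumn ds <= fuel ->
  Inv n (PP n k) (QQ n k) (dgen n k (k <= n + 1 - k) fuel (size ds).+1 ds) /\
  sumn (dgen n k (k <= n + 1 - k) fuel (size ds).+1 ds) = n.
Proof.
move=> hk; have [q0 qp _] := PQ_facts hk.
elim: fuel ds => [|f IH] ds hI hf /=.
  case: eqP => [-> //|hne]; case: hI => _ hs _ _ _; lia.
case: eqP => [-> //|hne].
have hlt : sumn ds < n by case: hI => _ hs _ _ _; lia.
have [d0 hI'] := Inv_step (dstep_eq n k ds) (introT andP (conj q0 qp)) hI hlt.
have := IH _ hI'; rewrite size_rcons; apply.
rewrite -cats1 sumn_cat /=; lia.
Qed.

Lemma Inv_final n P Q ds : 0 < Q <= P -> P + Q = n + 1 -> Inv n P Q ds -> sumn ds = n ->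
  ds <> [::] /\ (if odd (size ds) then oddsum ds = P /\ evensum ds = Q - 1
                 else evensum ds = Q /\ oddsum ds = P - 1).
Proof.
move=> /andP[q0 qp] hpq [hpos hs [b1 b2] hc _] hsn.
have hS := oddevensum ds.
have hne : ds <> [::] by move=> h; move: hsn; rewrite h /=; lia.
split=> //.
have hO : oddsum ds <= P.
  case: (leqP (oddsum ds) P) => // h.
  have hE : evensum ds + 2 <= Q by lia.
  have : (P + 1) * Q <= (evensum ds + 1) * P.
    apply: leq_trans b1; rewrite leq_mul2r; lia.
  have : (evensum ds + 1) * P <= (Q - 1) * P by rewrite leq_mul2r; lia.
  nia.
have hE : evensum ds <= Q.
  case: (leqP (evensum ds) Q) => // h.
  have hO2 : oddsum ds + 2 <= P by lia.
  have : (Q + 1) * P <= (oddsum ds + 1) * Q.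
    apply: leq_trans b2; rewrite leq_mul2r; lia.
  have : (oddsum ds + 1) * Q <= (P - 1) * Q by rewrite leq_mul2r; lia.
  nia.
have hl : 0 < last 0 ds.
  case/lastP: ds hne hpos {hc hS hs hsn hO hE b1 b2} => // s x _.
  by rewrite all_rcons last_rcons => /andP[].
have hlo : last 0 ds <= (if odd (size ds) then oddsum ds else evensum ds).
  case/lastP: ds hne {hc hS hs hsn hO hE b1 b2 hl hpos} => // s x _.
  rewrite last_rcons size_rcons oddsum_rcons evensum_rcons; case: (odd _) => /=; lia.
move: hc => /(_ hne); case: (odd (size ds)) hlo => hlo hc.
- case: (leqP P (oddsum ds)) => h; first by lia.
  have : evensum ds = Q by lia.
  move=> hEQ; rewrite hEQ in hc.
  have : (oddsum ds - last 0 ds + 1) * Q <= (P - 1) * Q by rewrite leq_mul2r; lia.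
  nia.
- case: (leqP Q (evensum ds)) => h; first by lia.
  have : oddsum ds = P by lia.
  move=> hOP; rewrite hOP in hc.
  have : (evensum ds - last 0 ds + 1) * P <= (Q - 1) * P by rewrite leq_mul2r; lia.
  nia.
Qed.

Lemma mem_Lambda3 n b : (b \in Lambda3 n) = (1 <= b.1.1 + b.1.2 + b.2 <= n).
Proof.
case: b => [[x y] z] /=.
rewrite /Lambda3 mem_filter; case h: (1 <= _ <= n) => //; rewrite andTb.
rewrite /= in h; move/andP: h => [h1 h2].
apply/flatten_mapP; exists x; first by rewrite mem_iota; lia.
apply/allpairsP; exists (y, z); rewrite !mem_iota /=; split => //; lia.
Qed.

Lemma uniq_flatten_map (S T : eqType) (s : seq S) (A : S -> seq T) (key : T -> S) :
  uniq s -> (forall x, uniq (A x)) -> (forall x y, y \in A x -> key y = x) ->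
  uniq (flatten (map A s)).
Proof.
move=> us uA hk; elim: s us => [|x s IH] //= /andP[xs us].
rewrite cat_uniq uA IH // andbT /=.
apply/hasP => -[y /flatten_mapP [x' hx' hy'] hy].
have e1 := hk _ _ hy; have e2 := hk _ _ hy'.
by move: xs; rewrite -e1 e2 hx'.
Qed.

Lemma uniq_Lambda3 n : uniq (Lambda3 n).
Proof.
rewrite /Lambda3 filter_uniq //.
apply: (@uniq_flatten_map _ _ _ _ (fun t => t.1.1)); first exact: iota_uniq.
  move=> a; apply: (@uniq_flatten_map _ _ _ _ (fun t => t.1.2)); first exact: iota_uniq.
    move=> b; rewrite map_inj_uniq ?iota_uniq //; by move=> c c' [].
  by move=> b t /mapP [c _ ->].
move=> a t /flatten_mapP [b _ /mapP [c _ ->]] //.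
Qed.

Lemma An_inj n b b' : b \in Lambda3 n -> b' \in Lambda3 n -> An n b = An n b' -> b = b'.
Proof.
rewrite !mem_Lambda3; case: b => [[x y] z]; case: b' => [[x' y'] z'] /= h h' [e1 e2].
have hy : y = y'.
  have := congr1 (modn^~ n.+1) e2; rewrite /= ![_ + n.+1 * _]addnC ![n.+1 * _]mulnC !modnMDl.
  by rewrite !modn_small //; lia.
subst y'.
have hz : z = z'.
  by move/eqP: e2; rewrite eqn_add2l eqn_mul2l /= => /eqP.
subst z'; have : x = x' by lia.
by move=> ->.
Qed.

Lemma fk_mJ k n (J : pred (nat * nat * nat)) :
  fk k (mJ n J) = (\sum_(b <- Lambda3 n | J b) fk k (An n b))%R.
Proof.
rewrite /fk /mJ /= -!natz !natr_sum !mulr_sumr -big_split /=.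
by apply: eq_bigr => b _; rewrite !natz.
Qed.

Lemma sum_pick n b0 (F : nat * nat * nat -> int) :
  b0 \in Lambda3 n -> (\sum_(b <- Lambda3 n) (if b == b0 then F b else 0) = F b0)%R.
Proof.
move=> hb0; rewrite (bigD1_seq b0 hb0 (uniq_Lambda3 n)) big1_seq.
  by rewrite eqxx /= addr0.
by move=> b /andP[/negbTE -> _].
Qed.

Lemma sum_swap n (D : pred (nat * nat)) x0 b0 (F : nat * nat * nat -> int) :
  b0 \in Lambda3 n -> An n b0 = x0 -> D x0 = false ->
  (\sum_(b <- Lambda3 n | D (An n b) || (An n b == x0)) F b =
   \sum_(b <- Lambda3 n | D (An n b)) F b + F b0)%R.
Proof.
move=> hb0 hx0 hD.
rewrite big_mkcond [X in (X + _)%R]big_mkcond -(sum_pick F hb0) -big_split.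
rewrite [LHS]big_seq [RHS]big_seq; apply: eq_bigr => b hb.
case: eqP => [e|ne].
  have -> : b = b0 by apply: (An_inj hb hb0); rewrite e.
  by rewrite hx0 hD eqxx /= add0r.
rewrite orbF; case: eqP => [eb|_]; first by case: ne; rewrite eb hx0.
symmetry; exact: addr0.
Qed.

Definition axis (w : nat * nat) := (w.1 == 0) || (w.2 == 0).
Definition Tp n (w : nat * nat) := (w.1 + 0 + n * w.2, w.2 + 0 + n * w.2).

Lemma pt_axis z b c : axis (pt z b c).
Proof. by rewrite /pt /axis; case: (z == b) => /=; rewrite ?eqxx ?orbT. Qed.

Lemma vpt_axis eta j : axis (vpt eta j).
Proof. by case: eta => z ds; rewrite vpt_pt pt_axis. Qed.

Lemma Tinj n u w p : axis u -> axis w -> 0 < w.1 + w.2 ->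
  Tp n w = (u.1 + p + n * u.2, u.2 + p + n * u.2) -> u = w.
Proof.
case: u => [u1 u2]; case: w => [w1 w2]; rewrite /axis /Tp /= => hu hw hw0 [e1 e2].
case/orP: hu => /eqP hu; case/orP: hw => /eqP hw; subst; try nia.
- have h : u2 = w2 by lia. subst; done.
- have h : p = 0 by lia. subst; have -> : u1 = w1 by lia. done.
Qed.

Definition Dset n eta (x : nat * nat) :=
  ((x.1 == x.2) && (1 <= x.1 <= n))
  || has (fun j => has (fun p =>
            x == ((vpt eta j).1 + p + rj n eta j, (vpt eta j).2 + p + rj n eta j))
            (iota 0 (n - j).+1))
         (iota 1 n.-1).

Lemma inTprime_split n eta x : 0 < n ->
  inTprime n eta x = Dset n eta x || (x == Tp n (vpt eta n)).
Proof.
move=> n0; rewrite /inTprime /Dset -orbA; congr orb.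
have -> : iota 1 n = iota 1 n.-1 ++ [:: n].
  have e : n = n.-1 + 1 by lia.
  by rewrite {1}e iotaD /= add1n prednK.
rewrite has_cat; congr orb.
by rewrite /= subnn /= /rj /Tp !orbF.
Qed.

Lemma Dset_eq n eta eta' : (forall j, 0 < j < n -> vpt eta' j = vpt eta j) ->
  Dset n eta' =1 Dset n eta.
Proof.
move=> h x; rewrite /Dset; congr orb; apply: eq_in_has => j; rewrite mem_iota => hj.
by rewrite /rj h //; lia.
Qed.

Lemma Dset_T n eta w : axis w -> 0 < w.1 + w.2 ->
  (forall j, 0 < j < n -> vpt eta j <> w) -> Dset n eta (Tp n w) = false.
Proof.
move=> hw hw0 hne; rewrite /Dset.
have -> : (Tp n w).1 == (Tp n w).2 = false.
  case: w hw hw0 {hne} => [w1 w2]; rewrite /axis /Tp /= => /orP[] /eqP -> ?; apply/eqP; lia.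
apply/hasP => -[j]; rewrite mem_iota => hj /hasP [p _ /eqP e].
by apply: (hne j); [lia | apply: Tinj e; rewrite ?vpt_axis].
Qed.

Definition pre3 (w : nat * nat) : nat * nat * nat :=
  if w.2 == 0 then (w.1, 0, 0) else (0, 0, w.2).

Lemma pre3_spec n w : axis w -> 0 < w.1 + w.2 <= n ->
  pre3 w \in Lambda3 n /\ An n (pre3 w) = Tp n w.
Proof.
case: w => [w1 w2]; rewrite /axis /pre3 /Tp /An mem_Lambda3 /= => /orP[] /eqP -> h.
- case: eqP => [e|e] /=; split; try lia; congr pair; lia.
- rewrite eqxx /=; split; try lia; congr pair; lia.
Qed.

Lemma swap_main n k eta eta' wo wn : 0 < n ->
  (forall j, 0 < j < n -> vpt eta' j = vpt eta j) ->
  vpt eta n = wo -> vpt eta' n = wn ->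
  0 < wo.1 + wo.2 <= n -> 0 < wn.1 + wn.2 <= n ->
  (forall j, 0 < j < n -> vpt eta j <> wo) -> (forall j, 0 < j < n -> vpt eta j <> wn) ->
  (fk k (mJ n (Jeta n eta')) + fk k (Tp n wo) = fk k (mJ n (Jeta n eta)) + fk k (Tp n wn))%R.
Proof.
move=> n0 hagree ho hn hwo hwn hneo hnen.
have axo : axis wo by rewrite -ho vpt_axis.
have axn : axis wn by rewrite -hn vpt_axis.
have [bo1 bo2] := pre3_spec axo hwo.
have [bn1 bn2] := pre3_spec axn hwn.
rewrite !fk_mJ /Jeta.
under eq_bigl do rewrite inTprime_split // (Dset_eq hagree) hn.
under [X in (_ = X + _)%R]eq_bigl do rewrite inTprime_split // ho.
rewrite (@sum_swap n (Dset n eta) (Tp n wn) (pre3 wn) _ bn1 bn2); last by rewrite Dset_T //; lia.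
rewrite (@sum_swap n (Dset n eta) (Tp n wo) (pre3 wo) _ bo1 bo2); last by rewrite Dset_T //; lia.
rewrite bo2 bn2; ring.
Qed.

Definition Sb (b : bool) ds := if b then oddsum ds else evensum ds.

Lemma Sb_rcons b s d : Sb b (rcons s d) = Sb b s + (if b == odd (size s).+1 then d else 0).
Proof. by rewrite /Sb oddsum_rcons evensum_rcons; case: b; case: (odd _). Qed.

Lemma pt_inj z b b' c c' : pt z b c = pt z b' c' -> 0 < c -> 0 < c' -> b = b' /\ c = c'.
Proof.
rewrite /pt; case: z; case: b; case: b' => /= e c0 c1; case: e => *; subst; try (by split); exfalso; lia.
Qed.

Lemma pt_sum z b c : (pt z b c).1 + (pt z b c).2 = c.
Proof. by rewrite /pt; case: (z == b) => /=; lia. Qed.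

Lemma vpt_bound z ds j : 0 < j <= sumn ds ->
  exists b c, [/\ vpt (z, ds) j = pt z b c, 0 < c & c <= Sb b ds].
Proof.
elim/last_ind: ds j => [|s d IH] j hj; first by move: hj => /=; lia.
move: hj; rewrite -cats1 sumn_cat /= addn0 cats1 => hj.
case: (leqP j (sumn s)) => hjs.
  have [b [c [e c0 cb]]] := IH j (introT andP (conj (proj1 (andP hj)) hjs)).
  exists b, c; split => //; first by rewrite vpt_prefix //; lia.
  rewrite Sb_rcons; lia.
have -> : j = sumn s + (j - sumn s) by lia.
rewrite vpt_last; last by lia.
exists (odd (size s).+1), (Sb (odd (size s).+1) s + (j - sumn s)); split => //; first by lia.
rewrite Sb_rcons eqxx; lia.
Qed.

Lemma noncoll z s d j : 0 < d -> 0 < j < sumn s + d ->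
  vpt (z, rcons s d) j <> pt z (odd (size s).+1) (Sb (odd (size s).+1) s + d) /\
  vpt (z, rcons s d) j <> pt z (~~ odd (size s).+1) (Sb (~~ odd (size s).+1) s + 1).
Proof.
move=> d0 hj; set L := odd (size s).+1.
case: (leqP j (sumn s)) => hjs.
  rewrite vpt_prefix; last by lia.
  have [b [c [e c0 cb]]] := vpt_bound z (introT andP (conj (proj1 (andP hj)) hjs)).
  rewrite e; split => /pt_inj [] //; try lia; move=> eb ec; subst b; lia.
have -> : j = sumn s + (j - sumn s) by lia.
rewrite vpt_last; last by lia.
rewrite -/L.
have h1 : 0 < Sb L s + (j - sumn s) by lia.
split => e.
  have h2 : 0 < Sb L s + d by lia.
  have [_ ec] := pt_inj e h1 h2; rewrite /Sb in ec; lia.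
have h2 : 0 < Sb (~~ L) s + 1 by lia.
have [eb _] := pt_inj e h1 h2.
by move: eb; rewrite /L; case: (odd _).
Qed.

Lemma alt z s d n : 0 < d -> all (fun x => 0 < x) s -> sumn s + d = n ->
  exists eta', [/\ Omega n eta', eta' <> (z, rcons s d),
    (forall j, 0 < j < n -> vpt eta' j = vpt (z, rcons s d) j) &
    vpt eta' n = pt z (~~ odd (size s).+1) (Sb (~~ odd (size s).+1) s + 1)].
Proof.
move=> d0 hs hn.
case: (ltnP 1 d) => hd.
- exists (z, rcons (rcons s (d - 1)) 1); split.
  + rewrite /Omega /= !all_rcons hs /= -!cats1 !sumn_cat /=; apply/andP; split; first lia.
    apply/eqP; lia.
  + move=> [] /(congr1 size); rewrite !size_rcons; lia.
  + move=> j hj; case: (leqP j (sumn s)) => hjs.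
      rewrite !vpt_prefix //; try lia.
      rewrite -cats1 sumn_cat /=; lia.
    have -> : j = sumn s + (j - sumn s) by lia.
    rewrite vpt_prefix; last by rewrite -cats1 sumn_cat /=; lia.
    rewrite !vpt_last //; lia.
  + have -> : n = sumn (rcons s (d - 1)) + 1 by rewrite -cats1 sumn_cat /=; lia.
    rewrite vpt_last // size_rcons.
    have -> : odd (size s).+2 = ~~ odd (size s).+1 by rewrite /= negbK.
    rewrite -/(Sb (~~ odd (size s).+1) (rcons s (d - 1))) Sb_rcons.
    by case: (odd (size s).+1) => /=; rewrite addn0.
- have hd1 : d = 1 by lia.
  subst d.
  case/lastP: s hs hn => [|s1 d'] hs hn.
  + exists (~~ z, [:: 1]); split.
    * by rewrite /Omega /= -hn.
    * by case; case: z.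
    * move=> j; rewrite -hn /=; lia.
    * rewrite -hn /=.
      have -> : 1 = sumn [::] + 1 by [].
      rewrite (vpt_last (~~ z) [::] (c := 1) (d := 1)) //.
      by rewrite /oddsum /evensum !big_geq //= /pt; case: z.
  + move: hs; rewrite all_rcons => /andP[d'0 hs1].
    have hn' : sumn s1 + d' + 1 = n by rewrite -hn -cats1 sumn_cat /= addn0.
    exists (z, rcons s1 d'.+1); split.
    * rewrite /Omega /= all_rcons hs1 /= -cats1 sumn_cat /=.
      apply/eqP; lia.
    * move=> [] /(congr1 size); rewrite !size_rcons; lia.
    * move=> j hj; case: (leqP j (sumn s1)) => hjs.
        rewrite [in LHS]vpt_prefix; last by lia.
        rewrite [in RHS]vpt_prefix; last by rewrite -cats1 sumn_cat /=; lia.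
        by rewrite [in RHS]vpt_prefix //; lia.
      have -> : j = sumn s1 + (j - sumn s1) by lia.
      rewrite [in RHS]vpt_prefix; last by rewrite -cats1 sumn_cat /=; lia.
      rewrite !vpt_last //; lia.
    * have -> : n = sumn s1 + d'.+1 by lia.
      rewrite vpt_last; last by lia.
      rewrite size_rcons -/(Sb (odd (size s1).+1) s1).
      have -> : odd (size s1).+1 = ~~ odd (size s1).+2 by rewrite /= negbK.
      rewrite Sb_rcons.
      rewrite /= ?negbK; case: (odd (size s1)) => /=; congr pt; lia.
Qed.

Lemma fk_pt n k : 1 <= k <= n ->
  fk k (Tp n (pt (k <= n + 1 - k) true (PP n k))) = fk k (Tp n (pt (k <= n + 1 - k) false (QQ n k))).
Proof.
move=> hk.
have hP : ((n + 1 - k)%N%:Z = n%:Z + 1 - k%:Z)%R by lia.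
rewrite /PP /QQ /pt /Tp /fk; case: (k <= n + 1 - k) => /=;
  rewrite ?hP !PoszD !PoszM ?hP /=; ring.
Qed.

Lemma Inv0 n P Q : Q <= P -> Inv n P Q [::].
Proof.
move=> qp; rewrite /Inv /oddsum /evensum /= !big_geq //; split => //; lia.
Qed.

Theorem corollary3p9 (n k : nat) :
  1 <= n -> 1 <= k <= n ->
  exists eta : bool * seq nat,
    Omega n eta /\ eta <> eta_k n k /\
    fk k (mJ n (Jeta n eta)) = fk k (mJ n (Jeta n (eta_k n k))).
Proof.
move=> n1 hk.
have [q0 qp hpq] := PQ_facts hk.
have [hI hsum] := @Inv_dgen n k n [::] hk (Inv0 n qp) (leq_subr _ _).
have [hne hpar] := Inv_final (introT andP (conj q0 qp)) hpq hI hsum.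
have -> : eta_k n k = (k <= n + 1 - k, dgen n k (k <= n + 1 - k) n 1 [::]) by [].
move: hI hsum hne hpar.
set z := (k <= n + 1 - k).
set ds := dgen _ _ _ _ _ _.
clearbody ds.
case/lastP: ds => [//|s d] hI hsum _ hpar.
case: hI => hpos _ _ _ _.
move: hpos; rewrite all_rcons => /andP[d0 hs].
have hn : sumn s + d = n by move: hsum; rewrite -cats1 sumn_cat /= addn0.
have [eta' [hO hne' hag hvn]] := alt z d0 hs hn.
exists eta'; split => //; split => //.
have [L eL] : {L | L = odd (size s).+1} by exists (odd (size s).+1).
have hwo : vpt (z, rcons s d) n = pt z L (Sb L s + d).
  by rewrite eL -hn vpt_last //; lia.
have hcol j : 0 < j < n -> vpt (z, rcons s d) j <> pt z L (Sb L s + d) /\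
                           vpt (z, rcons s d) j <> pt z (~~ L) (Sb (~~ L) s + 1).
  by move=> hj; rewrite eL; apply: noncoll => //; rewrite hn.
have [eo en] : Sb L s + d = (if L then PP n k else QQ n k) /\
               Sb (~~ L) s + 1 = (if L then QQ n k else PP n k).
  move: hpar; rewrite size_rcons -eL /Sb oddsum_rcons evensum_rcons -eL.
  destruct L => /=; lia.
rewrite -eL in hvn.
have hb1 : 0 < (pt z L (Sb L s + d)).1 + (pt z L (Sb L s + d)).2 <= n.
  rewrite pt_sum eo; destruct L; lia.
have hb2 : 0 < (pt z (~~ L) (Sb (~~ L) s + 1)).1 + (pt z (~~ L) (Sb (~~ L) s + 1)).2 <= n.
  rewrite pt_sum en; destruct L; lia.
have := swap_main k n1 hag hwo hvn hb1 hb2 (fun j hj => proj1 (hcol j hj)) (fun j hj => proj2 (hcol j hj)).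
rewrite eo en.
have hf := fk_pt hk; rewrite -/z in hf.
by destruct L => /=; rewrite hf; exact: addIr.
Qed.
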